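(* Let $W:\mathcal X\to\mathcal Y$ be a DMC with a fixed input distribution, let $r>0$, and let $\alpha,\beta\in\mathcal Y_{\mathrm{small}}$ be distinct output letters such that $\boldsymbol\beta\in\mathcal C(\boldsymbol\alpha,r)$. Then the channel $Q$ obtained by merging $\alpha$ and $\beta$ satisfies $I(W)-I(Q)\le \frac{4|\mathcal X|r}{|\mathcal Y|}$.
   Context: $\mathcal X,\mathcal Y$ finite disjoint sets, $|\mathcal X|\ge2$; $W$ a DMC with transition probabilities $W(y|x)$; input distribution $\pi(x)>0$ fixed, output probabilities $\pi(y)=\sum_x\pi(x)W(y|x)>0$; $I(\cdot)$ is input–output mutual information (natural log). Merging $\alpha,\beta$ gives $Q$ with output alphabet $(\mathcal Y\setminus\{\alpha,\beta\})\cup\{\gamma\}$, $Q(\gamma|x)=W(\alpha|x)+W(\beta|x)$, $Q(y|x)=W(y|x)$ otherwise. $\mathcal Y_{\mathrm{small}}=\{y\in\mathcal Y:\pi(y)\le 2/|\mathcal Y|\}$. For an output letter $\alpha$, $\boldsymbol\alpha=(\alpha_x)_{x\in\mathcal X}$ with $\alpha_x=W(x|\alpha)=\pi(x)W(\alpha|x)/\pi(\alpha)$ is its posterior probability vector. $\mathbb R^{\mathcal X}_K=\{\boldsymbol\zeta\in\mathbb R^{\mathcal X}:\sum_x\zeta_x=1\}$. $x_{\max}=x_{\max}(\boldsymbol\alpha)$ is an index of a largest entry of $\boldsymbol\alpha$ (ties broken arbitrarily but consistently), $\mathcal X'=\mathcal X\setminus\{x_{\max}\}$, $\omega_\downarrow(a,r)=\max(\sqrt{r^2/4+ar}-r/2,\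 r)$, $\omega'(a,r)=\omega_\downarrow(a,r)/(|\mathcal X|-1)$, and $\mathcal C(\boldsymbol\alpha,r)=\{\boldsymbol\zeta\in\mathbb R^{\mathcal X}_K: |\zeta_x-\alpha_x|\le\omega'(\alpha_x,r)\ \forall x\in\mathcal X'\}$. *)

(* Defs.v *)
From Stdlib Require Import Reals List.
Import ListNotations.
Open Scope R_scope.

Definition lsum {A : Type} (l : list A) (f : A -> R) : R :=
  fold_right (fun a acc => f a + acc) 0 l.

Definition inputs (m : nat) : list nat := seq 0 m.

(* Output probability pi(y) = sum_x pi(x) W(y|x); the channel W is given as
   W y x = W(y|x). *)
Definition out_prob {B : Type} (m : nat) (pi : nat -> R) (W : B -> nat -> R)
  (y : B) : R :=
  lsum (inputs m) (fun x => pi x * W y x).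

(* One term pi(x) W(y|x) ln(W(y|x)/pi(y)), with the convention 0 ln 0 = 0. *)
Definition mi_term (px wyx py : R) : R :=
  if Req_EM_T wyx 0 then 0 else px * wyx * ln (wyx / py).

Definition mutual_info {B : Type} (m : nat) (pi : nat -> R)
  (outs : list B) (W : B -> nat -> R) : R :=
  lsum (inputs m) (fun x =>
    lsum outs (fun y => mi_term (pi x) (W y x) (out_prob m pi W y))).

(* Merged channel Q: output alphabet (Y \ {alpha,beta}) ∪ {gamma},
   represented as option nat with None = gamma. *)
Definition merged_outs (n alpha beta : nat) : list (option nat) :=
  None :: map Some (filter (fun y => andb (negb (Nat.eqb y alpha)) (negb (Nat.eqb y beta)))
                           (seq 0 n)).

Definition merge (W : nat -> nat -> R) (alpha beta : nat) : option nat -> nat -> R :=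
  fun y x => match y with
             | None => W alpha x + W beta x
             | Some y' => W y' x
             end.

(* Posterior probability vector of output letter a: a_x = W(x|a). *)
Definition posterior (m : nat) (pi : nat -> R) (W : nat -> nat -> R) (a : nat)
  (x : nat) : R :=
  pi x * W a x / out_prob m pi W a.

Definition omega_down (a r : R) : R :=
  Rmax (sqrt (r ^ 2 / 4 + a * r) - r / 2) r.

Definition omega' (m : nat) (a r : R) : R := omega_down a r / (INR m - 1).

Definition is_argmax (m : nat) (va : nat -> R) (xmax : nat) : Prop :=
  (xmax < m)%nat /\ forall x, (x < m)%nat -> va x <= va xmax.

Definition in_C (m : nat) (va vz : nat -> R) (xmax : nat) (r : R) : Prop :=
  lsum (inputs m) vz = 1 /\
  forall x, (x < m)%nat -> x <> xmax -> Rabs (vz x - va x) <= omega' m (va x) r.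

(* Main.v *)
Require Import Defs.
From Stdlib Require Import Reals List Lra Lia Psatz Arith.
Open Scope R_scope.

Lemma lsum_nil {A} (f : A -> R) : lsum nil f = 0.
Proof. reflexivity. Qed.
Lemma lsum_cons {A} (a : A) l f : lsum (a :: l) f = f a + lsum l f.
Proof. reflexivity. Qed.

Lemma lsum_ext {A} (l : list A) f g :
  (forall x, In x l -> f x = g x) -> lsum l f = lsum l g.
Proof.
  induction l as [|a l IH]; intros H; simpl; [reflexivity|].
  rewrite H by (left; reflexivity). rewrite IH; [reflexivity|].
  intros; apply H; right; auto.
Qed.

Lemma lsum_plus {A} (l : list A) f g :
  lsum l (fun x => f x + g x) = lsum l f + lsum l g.
Proof. induction l; simpl; [lra|]. rewrite IHl; lra. Qed.

Lemma lsum_minus {A} (l : list A) f g :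
  lsum l (fun x => f x - g x) = lsum l f - lsum l g.
Proof. induction l; simpl; [lra|]. rewrite IHl; lra. Qed.

Lemma lsum_div {A} (l : list A) f c :
  lsum l (fun x => f x / c) = lsum l f / c.
Proof. induction l; simpl; unfold Rdiv in *; [lra|]. rewrite IHl; lra. Qed.

Lemma lsum_le {A} (l : list A) f g :
  (forall x, In x l -> f x <= g x) -> lsum l f <= lsum l g.
Proof.
  induction l as [|a l IH]; intros H; simpl; [lra|].
  apply Rplus_le_compat; [apply H; left; auto| apply IH; intros; apply H; right; auto].
Qed.

Lemma lsum_abs {A} (l : list A) f :
  Rabs (lsum l f) <= lsum l (fun x => Rabs (f x)).
Proof.
  induction l; simpl. rewrite Rabs_R0; lra.
  eapply Rle_trans; [apply Rabs_triang|]. lra.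
Qed.

Lemma lsum_const {A} (l : list A) c : lsum l (fun _ => c) = INR (length l) * c.
Proof.
  induction l; simpl length; [simpl; lra|]. rewrite lsum_cons, IHl, S_INR. lra.
Qed.

Lemma lsum_map {A B} (h : A -> B) l g : lsum (map h l) g = lsum l (fun x => g (h x)).
Proof. induction l; simpl; [reflexivity|]. rewrite IHl; reflexivity. Qed.



Lemma lsum_app {A} (l1 l2 : list A) f : lsum (l1 ++ l2) f = lsum l1 f + lsum l2 f.
Proof. induction l1; simpl; [lra|]. rewrite IHl1; lra. Qed.

Lemma lsum_ind m k c : (k < m)%nat ->
  lsum (seq 0 m) (fun x => if Nat.eqb x k then c else 0) = c.
Proof.
  induction m; intros Hk; [lia|].
  rewrite seq_S, lsum_app. simpl lsum at 2.
  destruct (Nat.eq_dec k m) as [->|Hne].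
  - rewrite Nat.eqb_refl.
    rewrite (lsum_ext _ _ (fun _ => 0)).
    + rewrite lsum_const; lra.
    + intros x Hx. apply in_seq in Hx. destruct (Nat.eqb_spec x m); [lia|auto].
  - rewrite IHm by lia. destruct (Nat.eqb_spec m k); [lia|lra].
Qed.

Lemma lsum_split_at m k f : (k < m)%nat ->
  lsum (seq 0 m) f = f k + lsum (seq 0 m) (fun x => if Nat.eqb x k then 0 else f x).
Proof.
  intros Hk.
  rewrite <- (lsum_ind m k (f k)) by auto. rewrite <- lsum_plus.
  apply lsum_ext; intros x _. destruct (Nat.eqb_spec x k); [subst; lra|lra].
Qed.

Lemma lsum_two l (a b : nat) f : a <> b ->
  lsum l f = lsum l (fun y => if Nat.eqb y a then f y else 0)
           + lsum l (fun y => if Nat.eqb y b then f y else 0)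
           + lsum (filter (fun y => andb (negb (Nat.eqb y a)) (negb (Nat.eqb y b))) l) f.
Proof.
  intros Hab. induction l as [|y l IH]; simpl; [lra|].
  destruct (Nat.eqb_spec y a); destruct (Nat.eqb_spec y b); simpl; subst; try congruence;
  rewrite IH; try rewrite lsum_cons; lra.
Qed.

Lemma lsum_out n a b f : (a < n)%nat -> (b < n)%nat -> a <> b ->
  lsum (seq 0 n) f = f a + f b +
    lsum (filter (fun y => andb (negb (Nat.eqb y a)) (negb (Nat.eqb y b))) (seq 0 n)) f.
Proof.
  intros Ha Hb Hab. rewrite (lsum_two _ a b f Hab).
  rewrite (lsum_ext _ (fun y => if Nat.eqb y a then f y else 0) (fun y => if Nat.eqb y a then f a else 0)).
  rewrite (lsum_ext _ (fun y => if Nat.eqb y b then f y else 0) (fun y => if Nat.eqb y b then f b else 0)).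
  rewrite !lsum_ind by auto. reflexivity.
  - intros y _; destruct (Nat.eqb_spec y b); subst; auto.
  - intros y _; destruct (Nat.eqb_spec y a); subst; auto.
Qed.

Lemma lin_case a b pa pb r : 0<=a -> 0<=b -> 0<pa -> 0<pb -> 0<r ->
  Rabs (b - a) <= r -> pa*pb*(a-b)^2 <= (pa+pb)*r*(pa*a+pb*b).
Proof.
  intros Ha Hb Hpa Hpb Hr Hd.
  assert (H1 : pa*pb*Rabs (b-a) <= (pa+pb)*(pa*a+pb*b)).
  { destruct (Rle_dec b a).
    - rewrite Rabs_left1 by lra.
      assert (pa*pb*(a-b) <= pa*pb*a) by (apply Rmult_le_compat_l; nra).
      nra.
    - rewrite Rabs_right by lra.
      assert (pa*pb*(b-a) <= pa*pb*b) by (apply Rmult_le_compat_l; nra).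
      nra. }
  rewrite <- (pow2_abs (a-b)). rewrite Rabs_minus_sym.
  assert (0 <= Rabs (b-a)) by apply Rabs_pos.
  assert (pa*pb*Rabs(b-a)*Rabs(b-a) <= (pa+pb)*(pa*a+pb*b)*Rabs(b-a)) by
    (apply Rmult_le_compat_r; auto).
  assert ((pa+pb)*(pa*a+pb*b)*Rabs(b-a) <= (pa+pb)*(pa*a+pb*b)*r).
  { apply Rmult_le_compat_l; auto. apply Rmult_le_pos; [lra| apply Rplus_le_le_0_compat; apply Rmult_le_pos; lra]. }
  nra.
Qed.

Lemma key a b pa pb r : 0<=a -> 0<=b -> 0<pa -> 0<pb -> 0<r ->
  Rabs (b - a) <= omega_down a r -> pa*pb*(a-b)^2 <= (pa+pb)*r*(pa*a+pb*b).
Proof.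
  intros Ha Hb Hpa Hpb Hr Hd.
  destruct (Rle_dec (Rabs (b-a)) r) as [Hle|Hgt].
  { apply lin_case; auto. }
  unfold omega_down, Rmax in Hd.
  destruct (Rle_dec (sqrt (r ^ 2 / 4 + a * r) - r / 2) r); [lra|].
  set (t := sqrt (r ^ 2 / 4 + a * r)) in *.
  assert (Ht : t * t = r^2/4 + a*r) by (apply sqrt_sqrt; nra).
  assert (Ht0 : 0 <= t) by apply sqrt_pos.
  set (d := Rabs (b-a)) in *.
  assert (Hd2 : d*d + r*d <= a*r).
  { assert ((d + r/2)*(d+r/2) <= t*t) by (apply Rmult_le_compat; lra). nra. }
  assert (Hda : d < a) by nra.
  assert (Hbd : a - d <= b) by (unfold d in *; destruct (Rle_dec b a);
     [rewrite Rabs_left1 in * by lra; lra| rewrite Rabs_right in * by lra; lra]).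
  assert (Hsq : (a-b)^2 = d*d) by (unfold d; rewrite <- (pow2_abs (a-b)), Rabs_minus_sym; ring).
  rewrite Hsq.
  assert (HD : (pa+pb)*(a-d) <= pa*a+pb*b) by nra.
  assert (H3 : d*d <= r*(a-d)) by nra.
  assert (H4 : pa*pb*(d*d) <= pa*pb*(r*(a-d))) by (apply Rmult_le_compat_l; nra).
  assert (H5 : pa*pb <= (pa+pb)*(pa+pb)) by nra.
  assert (H6 : pa*pb*(r*(a-d)) <= (pa+pb)*(pa+pb)*(r*(a-d))) by (apply Rmult_le_compat_r; nra).
  assert (H7 : (pa+pb)*(pa+pb)*(r*(a-d)) <= (pa+pb)*r*(pa*a+pb*b)).
  { replace ((pa+pb)*(pa+pb)*(r*(a-d))) with ((pa+pb)*r*((pa+pb)*(a-d))) by ring.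
    apply Rmult_le_compat_l; nra. }
  lra.
Qed.

Lemma ln_sub u v : 0<u -> 0<v -> ln u - ln v <= u/v - 1.
Proof.
  intros Hu Hv.
  assert (Hq : 0 < u/v) by (apply Rdiv_lt_0_compat; auto).
  replace u with (v * (u/v)) at 1 by (field; lra).
  rewrite ln_mult by auto.
  pose proof (exp_ineq1_le (ln (u/v))). rewrite exp_ln in H by auto. lra.
Qed.

Lemma perx p wa wb pa pb r : 0<p -> 0<=wa -> 0<=wb -> 0<pa -> 0<pb -> 0<r ->
  Rabs (p*wb/pb - p*wa/pa) <= omega_down (p*wa/pa) r ->
  mi_term p wa pa + mi_term p wb pb - mi_term p (wa+wb) (pa+pb) <= (pa+pb)*r.
Proof.
  intros Hp Hwa Hwb Hpa Hpb Hr Hd.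
  assert (Hk := key (p*wa/pa) (p*wb/pb) pa pb r).
  assert (Ha0 : 0 <= p*wa/pa) by (apply Rmult_le_pos; [nra| left; apply Rinv_0_lt_compat; auto]).
  assert (Hb0 : 0 <= p*wb/pb) by (apply Rmult_le_pos; [nra| left; apply Rinv_0_lt_compat; auto]).
  specialize (Hk Ha0 Hb0 Hpa Hpb Hr Hd).
  replace (pa * (p*wa/pa) + pb*(p*wb/pb)) with (p*(wa+wb)) in Hk by (field; lra).
  unfold mi_term.
  destruct (Req_EM_T wa 0) as [Ea|Ea]; destruct (Req_EM_T wb 0) as [Eb|Eb];
  destruct (Req_EM_T (wa+wb) 0) as [Es|Es]; try lra;
  try (assert (0 <= (pa+pb)*r) by (apply Rmult_le_pos; lra); lra).
  -
    subst wa. rewrite Rplus_0_l in *.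
    assert (Hwb' : 0 < wb) by lra.
    pose proof (ln_sub (wb/pb) (wb/(pa+pb))) as L.
    assert (0 < wb/pb) by (apply Rdiv_lt_0_compat; lra).
    assert (0 < wb/(pa+pb)) by (apply Rdiv_lt_0_compat; lra).
    specialize (L ltac:(auto) ltac:(auto)).
    replace (wb / pb / (wb / (pa + pb)) - 1) with (pa/pb) in L by (field; lra).
    replace (p * 0 / pa) with 0 in Hk by (field; lra).
    set (b := p*wb/pb) in *.
    assert (Hb : 0 < b) by (unfold b; apply Rdiv_lt_0_compat; nra).
    assert (pa * b <= (pa+pb)*r).
    { apply Rmult_le_reg_r with (pb*b); [nra|].
      replace (p*wb) with (pb*b) in Hk by (unfold b; field; lra). nra. }
    assert (p*wb*(ln (wb/pb) - ln (wb/(pa+pb))) <= p*wb*(pa/pb)) by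
      (apply Rmult_le_compat_l; nra).
    replace (p*wb*(pa/pb)) with (pa*b) in H2 by (unfold b; field; lra).
    rewrite Rplus_0_l; lra.
  -
    subst wb. rewrite Rplus_0_r in *.
    assert (Hwa' : 0 < wa) by lra.
    pose proof (ln_sub (wa/pa) (wa/(pa+pb))) as L.
    assert (0 < wa/pa) by (apply Rdiv_lt_0_compat; lra).
    assert (0 < wa/(pa+pb)) by (apply Rdiv_lt_0_compat; lra).
    specialize (L ltac:(auto) ltac:(auto)).
    replace (wa / pa / (wa / (pa + pb)) - 1) with (pb/pa) in L by (field; lra).
    replace (p * 0 / pb) with 0 in Hk by (field; lra).
    set (a := p*wa/pa) in *.
    assert (Ha : 0 < a) by (unfold a; apply Rdiv_lt_0_compat; nra).
    assert (pb * a <= (pa+pb)*r).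
    { apply Rmult_le_reg_r with (pa*a); [nra|].
      replace (p*wa) with (pa*a) in Hk by (unfold a; field; lra). nra. }
    assert (p*wa*(ln (wa/pa) - ln (wa/(pa+pb))) <= p*wa*(pb/pa)) by
      (apply Rmult_le_compat_l; nra).
    replace (p*wa*(pb/pa)) with (pb*a) in H2 by (unfold a; field; lra).
    rewrite Rplus_0_r; lra.
  -
    assert (Hwa' : 0 < wa) by lra. assert (Hwb' : 0 < wb) by lra.
    assert (0 < wa/pa) by (apply Rdiv_lt_0_compat; lra).
    assert (0 < wb/pb) by (apply Rdiv_lt_0_compat; lra).
    assert (0 < (wa+wb)/(pa+pb)) by (apply Rdiv_lt_0_compat; lra).
    pose proof (ln_sub (wa/pa) ((wa+wb)/(pa+pb)) ltac:(auto) ltac:(auto)) as L1.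
    pose proof (ln_sub (wb/pb) ((wa+wb)/(pa+pb)) ltac:(auto) ltac:(auto)) as L2.
    assert (E1 : p*wa*(ln (wa/pa) - ln ((wa+wb)/(pa+pb))) <= p*wa*(wa / pa / ((wa + wb) / (pa + pb)) - 1))
      by (apply Rmult_le_compat_l; nra).
    assert (E2 : p*wb*(ln (wb/pb) - ln ((wa+wb)/(pa+pb))) <= p*wb*(wb / pb / ((wa + wb) / (pa + pb)) - 1))
      by (apply Rmult_le_compat_l; nra).
    set (E := p*wa*(wa / pa / ((wa + wb) / (pa + pb)) - 1) + p*wb*(wb / pb / ((wa + wb) / (pa + pb)) - 1)).
    assert (HE : E * (p*(wa+wb)) = pa * pb * (p * wa / pa - p * wb / pb) ^ 2)
      by (unfold E; field; lra).
    assert (E <= (pa+pb)*r).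
    { apply Rmult_le_reg_r with (p*(wa+wb)); [nra|]. rewrite HE. lra. }
    unfold E in *. lra.
Qed.

Lemma om_mono a b r : 0 <= r -> a <= b -> omega_down a r <= omega_down b r.
Proof.
  intros Hr Hab. unfold omega_down. apply Rle_max_compat_r.
  apply Rplus_le_compat_r. apply sqrt_le_1_alt. nra.
Qed.

Lemma om_ge a r : r <= omega_down a r.
Proof. unfold omega_down. apply Rmax_r. Qed.

Lemma Cbound m va vz xmax r : (2 <= m)%nat -> 0 < r ->
  (forall x, (x < m)%nat -> 0 <= va x) -> lsum (inputs m) va = 1 ->
  is_argmax m va xmax -> in_C m va vz xmax r ->
  forall x, (x < m)%nat -> Rabs (vz x - va x) <= omega_down (va x) r.
Proof.
  intros Hm Hr H0 H1 [Hxm Hmax] [Hz Hc] x Hx.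
  assert (Hm1 : 1 <= INR m - 1).
  { assert (2 <= INR m) by (replace 2 with (INR 2) by (simpl; lra); apply le_INR; auto). lra. }
  destruct (Nat.eq_dec x xmax) as [->|Hne].
  2: { eapply Rle_trans; [apply Hc; auto|]. unfold omega'.
       set (w := omega_down (va x) r). assert (r <= w) by apply om_ge.
       assert (Hw : w / (INR m - 1) * (INR m - 1) = w) by (field; lra).
       assert (0 <= w / (INR m - 1)) by (apply Rmult_le_pos; [lra| left; apply Rinv_0_lt_compat; lra]).
       nra. }
  set (c := omega_down (va xmax) r / (INR m - 1)).
  set (d := fun y => vz y - va y).
  assert (Hd : lsum (seq 0 m) d = 0) by (unfold d; rewrite lsum_minus; unfold inputs in *; lra).
  rewrite (lsum_split_at m xmax d Hxm) in Hd.
  change (vz xmax - va xmax) with (d xmax).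
  replace (d xmax) with (- lsum (seq 0 m) (fun y => if Nat.eqb y xmax then 0 else d y)) by lra.
  rewrite Rabs_Ropp. eapply Rle_trans; [apply lsum_abs|].
  eapply Rle_trans.
  { apply (lsum_le _ _ (fun y => if Nat.eqb y xmax then 0 else c)).
    intros y Hy. apply in_seq in Hy. destruct (Nat.eqb_spec y xmax).
    - rewrite Rabs_R0; lra.
    - unfold d. eapply Rle_trans; [apply Hc; [lia|auto]|]. unfold omega', c.
      unfold Rdiv. apply Rmult_le_compat_r.
      + left; apply Rinv_0_lt_compat; lra.
      + apply om_mono; [lra| apply Hmax; lia]. }
  pose proof (lsum_split_at m xmax (fun _ => c) Hxm) as Hs.
  rewrite lsum_const, length_seq in Hs.
  assert (Hc2 : c * (INR m - 1) = omega_down (va xmax) r) by (unfold c; field; lra).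
  simpl in Hs. lra.
Qed.

Theorem corollary4
  (m n : nat) (pi : nat -> R) (W : nat -> nat -> R) (r : R)
  (alpha beta xmax : nat)
  (Hm : (2 <= m)%nat)
  (HW0 : forall y x, (y < n)%nat -> (x < m)%nat -> 0 <= W y x)
  (HW1 : forall x, (x < m)%nat -> lsum (seq 0 n) (fun y => W y x) = 1)
  (Hpi : forall x, (x < m)%nat -> 0 < pi x)
  (Hpi1 : lsum (inputs m) pi = 1)
  (HpiY : forall y, (y < n)%nat -> 0 < out_prob m pi W y)
  (Hr : 0 < r)
  (Ha : (alpha < n)%nat) (Hb : (beta < n)%nat) (Hab : alpha <> beta)
  (Hasmall : out_prob m pi W alpha <= 2 / INR n)
  (Hbsmall : out_prob m pi W beta <= 2 / INR n)
  (Hxmax : is_argmax m (posterior m pi W alpha) xmax)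
  (HC : in_C m (posterior m pi W alpha) (posterior m pi W beta) xmax r) :
  mutual_info m pi (seq 0 n) W
    - mutual_info m pi (merged_outs n alpha beta) (merge W alpha beta)
  <= 4 * INR m * r / INR n.
Proof.
  set (pa := out_prob m pi W alpha) in *.
  set (pb := out_prob m pi W beta) in *.
  assert (Hpa : 0 < pa) by (apply HpiY; auto).
  assert (Hpb : 0 < pb) by (apply HpiY; auto).
  assert (HN : out_prob m pi (merge W alpha beta) None = pa + pb).
  { unfold pa, pb, out_prob. rewrite <- lsum_plus. apply lsum_ext; intros x _.
    simpl. ring. }
  assert (Hdiff : mutual_info m pi (seq 0 n) W
    - mutual_info m pi (merged_outs n alpha beta) (merge W alpha beta)
    = lsum (inputs m) (fun x => mi_term (pi x) (W alpha x) pa + mi_term (pi x) (W beta x) pb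
          - mi_term (pi x) (W alpha x + W beta x) (pa + pb))).
  { unfold mutual_info. rewrite <- lsum_minus. apply lsum_ext; intros x _.
    rewrite (lsum_out n alpha beta _ Ha Hb Hab).
    unfold merged_outs. rewrite lsum_cons, lsum_map. rewrite HN. simpl merge.
    fold pa pb.
    match goal with |- _ + _ + ?L1 - (_ + ?L2) = _ => assert (HL : L1 = L2) by reflexivity; rewrite HL; ring end. }
  rewrite Hdiff; clear Hdiff.
  set (va := posterior m pi W alpha) in *.
  set (vb := posterior m pi W beta) in *.
  assert (Hva0 : forall x, (x < m)%nat -> 0 <= va x).
  { intros x Hx. unfold va, posterior. fold pa.
    apply Rmult_le_pos; [apply Rmult_le_pos; [left; auto| auto] | left; apply Rinv_0_lt_compat; auto]. }
  assert (Hva1 : lsum (inputs m) va = 1).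
  { unfold va, posterior. fold pa.
    rewrite (lsum_div _ (fun x => pi x * W alpha x)). unfold pa, out_prob. field.
    fold (out_prob m pi W alpha). fold pa. lra. }
  pose proof (Cbound m va vb xmax r Hm Hr Hva0 Hva1 Hxmax HC) as HB.
  eapply Rle_trans.
  { apply (lsum_le _ _ (fun _ => (pa+pb)*r)). intros x Hx. apply in_seq in Hx.
    assert (Hxm : (x < m)%nat) by lia.
    apply perx; auto. apply (HB x Hxm). }
  rewrite lsum_const. unfold inputs. rewrite length_seq.
  assert (Hn : 0 < INR n) by (apply lt_0_INR; lia).
  assert (H4 : pa + pb <= 4 / INR n).
  { replace (4 / INR n) with (2/INR n + 2/INR n) by (field; lra). lra. }
  assert (0 <= INR m) by apply pos_INR.
  replace (4 * INR m * r / INR n) with (INR m * r * (4 / INR n)) by (field; lra).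
  assert (INR m * r * (pa+pb) <= INR m * r * (4 / INR n)) by (apply Rmult_le_compat_l; nra).
  nra.
Qed.
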